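(* Let $(X,d,f)$ be a dynamical system and $\mathcal{A}=\{\mathcal{U}_n\}_{n\in\mathbb{N}}$ a tame defining sequence of $(X,d)$. (i) If $f$ has the shadowing property, then $f$ has the finite shadowing property and the inverse system $(\hookrightarrow,\mathcal{PO}(\mathcal{U}_n))$ satisfies the Mittag-Leffler Condition. (ii) Suppose in addition that $\mathcal{A}$ is complete and $f$ is uniformly continuous. If $f$ has the finite shadowing property and $(\hookrightarrow,\mathcal{PO}(\mathcal{U}_n))$ satisfies the Mittag-Leffler Condition, then $f$ has the shadowing property.
   Context: Spaces are nonempty separable metrizable; a dynamical system $(X,d,f)$ has admissible metric $d$ and continuous $f:X\to X$. A partition is a cover by pairwise disjoint nonempty clopen sets. A defining sequence is a sequence of partitions $\{\mathcal{U}_n\}$, each refining the previous, whose union is a basis; complete if nested sequences $U_n\in\mathcal{U}_n$ have nonempty intersection; tame if $\sup\{\operatorname{diam}O:O\in\mathcal{U}_n\}\to0$ and each $\mathcal{U}_n$ is $\rho_n$-separated for some $\rho_n>0$ (points of distinct elements are at distance $\ge\rho_n$). Shadowing notions: a $\delta$-pseudo-orbit is a finite or infinite sequence $(x_n)$ with $d(f(x_n),x_{n+1})<\delta$; it is $\varepsilon$-shadowed by $x$ if $d(f^n(x),x_n)<\varepsilon$ for all indices. Finite shadowing property: $\forall\varepsilon\,\exists\delta$ every finite $\delta$-pseudo-orbit is $\varepsilon$-shadowed; shadowing property: same for infinite ones. $\mathcal{PO}(\mathcal{U})=\{(O_i)_{i\in\mathbb{N}}\in\mathcal{U}^{\mathbb{N}}: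 f(O_i)\cap O_{i+1}\ne\emptyset\ \forall i\}$. The map $\hookrightarrow:\mathcal{PO}(\mathcal{U}_{n+1})\to\mathcal{PO}(\mathcal{U}_n)$ sends $(O_i)$ to the unique $(V_i)\in\mathcal{U}_n^{\mathbb{N}}$ with $O_i\subseteq V_i$. An inverse system $(g_m,X_m)$, $g_m:X_{m+1}\to X_m$, satisfies the Mittag-Leffler Condition if for every $N$ there is $k>N$ such that $g_N\circ\cdots\circ g_k(X_{k+1})=g_N\circ\cdots\circ g_i(X_{i+1})$ for all $i\ge k$. *)

(* Defs.v *)
From Stdlib Require Import Reals.
Open Scope R_scope.

Section Defs.
Context {X : Type}.

Definition is_metric (d : X -> X -> R) : Prop :=
  (forall x y, 0 <= d x y) /\
  (forall x y, d x y = 0 <-> x = y) /\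
  (forall x y, d x y = d y x) /\
  (forall x y z, d x z <= d x y + d y z).

(** Separable (with a countable dense sequence; this also gives nonemptiness). *)
Definition separable (d : X -> X -> R) : Prop :=
  exists s : nat -> X, forall x eps, 0 < eps -> exists n, d x (s n) < eps.

Definition open (d : X -> X -> R) (U : X -> Prop) : Prop :=
  forall x, U x -> exists r, 0 < r /\ forall y, d x y < r -> U y.

Definition clopen (d : X -> X -> R) (U : X -> Prop) : Prop :=
  open d U /\ open d (fun x => ~ U x).

Definition continuous (d : X -> X -> R) (f : X -> X) : Prop :=
  forall x eps, 0 < eps ->
    exists delta, 0 < delta /\ forall y, d x y < delta -> d (f x) (f y) < eps.

Definition uniformly_continuous (d : X -> X -> R) (f : X -> X) : Prop :=
  forall eps, 0 < eps ->
    exists delta, 0 < delta /\ forall x y, d x y < delta -> d (f x) (f y) < eps.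

Definition subset (U V : X -> Prop) : Prop := forall x, U x -> V x.

(** A partition: a cover by pairwise disjoint nonempty clopen sets.
    A family of sets is represented as a predicate on sets. *)
Definition partition (d : X -> X -> R) (P : (X -> Prop) -> Prop) : Prop :=
  (forall U, P U -> exists x, U x) /\
  (forall U, P U -> clopen d U) /\
  (forall U V, P U -> P V -> U <> V -> forall x, U x -> V x -> False) /\
  (forall x, exists U, P U /\ U x).

Definition refines (P Q : (X -> Prop) -> Prop) : Prop :=
  forall U, P U -> exists V, Q V /\ subset U V.

Definition defining_sequence (d : X -> X -> R) (A : nat -> (X -> Prop) -> Prop) : Prop :=
  (forall n, partition d (A n)) /\
  (forall n, refines (A (S n)) (A n)) /\
  (forall W x, open d W -> W x -> exists n U, A n U /\ U x /\ subset U W).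

Definition complete_defseq (A : nat -> (X -> Prop) -> Prop) : Prop :=
  forall U : nat -> (X -> Prop),
    (forall n, A n (U n)) -> (forall n, subset (U (S n)) (U n)) ->
    exists x, forall n, U n x.

Definition tame (d : X -> X -> R) (A : nat -> (X -> Prop) -> Prop) : Prop :=
  (forall eps, 0 < eps -> exists N, forall n, (N <= n)%nat ->
      forall U, A n U -> forall x y, U x -> U y -> d x y <= eps) /\
  (forall n, exists rho, 0 < rho /\
      forall U V, A n U -> A n V -> U <> V ->
        forall x y, U x -> V y -> rho <= d x y).

Definition tame_defining_sequence d A := defining_sequence d A /\ tame d A.

Definition finite_pseudo_orbit (d : X -> X -> R) (f : X -> X) (delta : R)
  (m : nat) (x : nat -> X) : Prop :=
  forall i, (i < m)%nat -> d (f (x i)) (x (S i)) < delta.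

Definition finite_shadowed (d : X -> X -> R) (f : X -> X) (eps : R)
  (m : nat) (x : nat -> X) (z : X) : Prop :=
  forall i, (i <= m)%nat -> d (Nat.iter i f z) (x i) < eps.

Definition pseudo_orbit (d : X -> X -> R) (f : X -> X) (delta : R) (x : nat -> X) : Prop :=
  forall i, d (f (x i)) (x (S i)) < delta.

Definition shadowed (d : X -> X -> R) (f : X -> X) (eps : R) (x : nat -> X) (z : X) : Prop :=
  forall i, d (Nat.iter i f z) (x i) < eps.

Definition finite_shadowing (d : X -> X -> R) (f : X -> X) : Prop :=
  forall eps, 0 < eps -> exists delta, 0 < delta /\
    forall m x, finite_pseudo_orbit d f delta m x ->
      exists z, finite_shadowed d f eps m x z.

Definition shadowing (d : X -> X -> R) (f : X -> X) : Prop :=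
  forall eps, 0 < eps -> exists delta, 0 < delta /\
    forall x, pseudo_orbit d f delta x -> exists z, shadowed d f eps x z.

Definition PO (f : X -> X) (P : (X -> Prop) -> Prop) (O : nat -> (X -> Prop)) : Prop :=
  (forall i, P (O i)) /\ (forall i, exists x, O i x /\ O (S i) (f x)).

(** Image of PO(U_{k}) in PO(U_N) under the composite of the bonding maps
    (for k >= N): (V_i) is the image of (O_i) iff O_i is contained in V_i for all i
    (the element of the partition U_N containing O_i is unique). *)
Definition PO_image (f : X -> X) (A : nat -> (X -> Prop) -> Prop) (N k : nat)
  (V : nat -> (X -> Prop)) : Prop :=
  PO f (A N) V /\ exists O, PO f (A k) O /\ forall i, subset (O i) (V i).

(** Mittag-Leffler condition for the inverse system (hookrightarrow, PO(U_n)),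
    with bonding maps g_m : PO(U_{m+1}) -> PO(U_m):
    for every N there is k > N with g_N o ... o g_k (PO(U_{k+1}))
    = g_N o ... o g_i (PO(U_{i+1})) for all i >= k. *)
Definition mittag_leffler_PO (f : X -> X) (A : nat -> (X -> Prop) -> Prop) : Prop :=
  forall N, exists k, (N < k)%nat /\
    forall i, (k <= i)%nat ->
      forall V, PO_image f A N (S k) V <-> PO_image f A N (S i) V.

End Defs.

(* Main.v *)
Require Import Defs.
From Stdlib Require Import Reals Lra Lia Classical ClassicalEpsilon FunctionalExtensionality PropExtensionality.
Open Scope R_scope.

Definition cellS {X : Type} (A : nat -> (X -> Prop) -> Prop) (n : nat) (S : X -> Prop) : X -> Prop :=
  fun y => exists T, A n T /\ (exists q, T q /\ S q) /\ T y.

Fixpoint iterseq {T : Type} (v0 : T) (g : nat -> T -> T) (m : nat) : T :=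
  match m with 0%nat => v0 | S m' => g m' (iterseq v0 g m') end.

Lemma part_unique {X : Type} (d : X -> X -> R) P (HP : partition d P) U V x :
  P U -> P V -> U x -> V x -> U = V.
Proof.
  destruct HP as [_ [_ [Hd _]]]. intros. destruct (classic (U = V)) as [E|E]; auto.
  exfalso; eapply Hd; eauto.
Qed.

Lemma cellS_eq {X : Type} (d : X -> X -> R) A n T (S : X -> Prop) :
  partition d (A n) -> A n T -> (forall q, S q -> T q) -> (exists q, S q) -> cellS A n S = T.
Proof.
  intros HP HT HST [q Hq]. apply functional_extensionality; intro y.
  apply propositional_extensionality. split.
  - intros [T' [HT' [[q' [Hq'1 Hq'2]] Hy]]].
    assert (T' = T) by (apply (part_unique d (A n) HP T' T q'); auto). subst; auto.
  - intro Hy. exists T; split; [auto | split; [exists q; split; auto | auto]].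
Qed.

Lemma refines_le {X : Type} (d : X -> X -> R) A : defining_sequence d A ->
  forall n m, (n <= m)%nat -> forall T, A m T -> exists T', A n T' /\ subset T T'.
Proof.
  intros [_ [Hr _]] n m Hle. induction Hle; intros T HT.
  - exists T; split; auto. intros x; auto.
  - destruct (Hr m T HT) as [T1 [H1 H2]]. destruct (IHHle T1 H1) as [T2 [H3 H4]].
    exists T2; split; auto. intros x Hx; auto.
Qed.

Lemma coarse {X : Type} (d : X -> X -> R) A : defining_sequence d A ->
  forall n m, (n <= m)%nat -> forall T V, A m T -> A n V -> (exists q, T q /\ V q) -> subset T V.
Proof.
  intros Hds n m Hle T V HT HV [q [Hq1 Hq2]].
  destruct (refines_le d A Hds n m Hle T HT) as [T' [H1 H2]].
  rewrite <- (part_unique d (A n) (proj1 Hds n) T' V q); auto.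
Qed.

Lemma cellS_in {X : Type} (d : X -> X -> R) A : defining_sequence d A ->
  forall n m S, (n <= m)%nat -> A m S -> A n (cellS A n S) /\ subset S (cellS A n S).
Proof.
  intros Hds n m S Hle HS.
  destruct (proj1 (proj1 Hds m) S HS) as [q Hq].
  destruct (refines_le d A Hds n m Hle S HS) as [T [H1 H2]].
  rewrite (cellS_eq d A n T S (proj1 Hds n) H1 H2); eauto.
Qed.

Lemma cell_pt {X : Type} (d : X -> X -> R) A : defining_sequence d A ->
  forall n (p : X), A n (cellS A n (fun q => q = p)) /\ cellS A n (fun q => q = p) p.
Proof.
  intros Hds n p.
  destruct (proj2 (proj2 (proj2 (proj1 Hds n))) p) as [T [HT Hp]].
  rewrite (cellS_eq d A n T _ (proj1 Hds n) HT); eauto.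
  intros q ->; auto.
Qed.

Lemma po_image {X : Type} (d : X -> X -> R) (f : X -> X) A : defining_sequence d A ->
  forall n m, (n <= m)%nat -> forall O, PO f (A m) O ->
  PO f (A n) (fun j => cellS A n (O j)) /\ forall j, subset (O j) (cellS A n (O j)).
Proof.
  intros Hds n m Hle O [HO1 HO2].
  split; [split|].
  - intro j; apply (cellS_in d A Hds n m); auto.
  - intro j. destruct (HO2 j) as [x [H1 H2]]. exists x; split.
    + apply (cellS_in d A Hds n m); auto.
    + apply (cellS_in d A Hds n m (O (S j))); auto.
  - intro j; apply (cellS_in d A Hds n m); auto.
Qed.

Lemma dxx {X : Type} (d : X -> X -> R) : is_metric d -> forall x, d x x = 0.
Proof. intros [_ [Hz _]] x. apply Hz; reflexivity. Qed.

Lemma part1_fs {X : Type} (d : X -> X -> R) f : is_metric d -> shadowing d f -> finite_shadowing d f.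
Proof.
  intros Hm Hsh eps Heps. destruct (Hsh eps Heps) as [delta [Hd Hs]].
  exists delta; split; auto. intros m x Hx.
  set (y := fun i => if Nat.leb i m then x i else Nat.iter (i - m) f (x m)).
  assert (Hy : pseudo_orbit d f delta y).
  { intro i. unfold y. destruct (Nat.leb_spec i m); destruct (Nat.leb_spec (S i) m).
    - apply Hx; lia.
    - assert (i = m) by lia. subst. replace (S m - m)%nat with 1%nat by lia. simpl.
      rewrite dxx; auto.
    - lia.
    - replace (S i - m)%nat with (S (i - m)) by lia. simpl. rewrite dxx; auto. }
  destruct (Hs y Hy) as [z Hz]. exists z. intros i Hi. specialize (Hz i). unfold y in Hz.
  destruct (Nat.leb_spec i m); [auto|lia].
Qed.

Lemma part1_ml {X : Type} (d : X -> X -> R) f A : is_metric d -> tame_defining_sequence d A ->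
  shadowing d f -> mittag_leffler_PO f A.
Proof.
  intros Hm [Hds [Hmesh Hsep]] Hsh N.
  destruct (Hsep N) as [rho [Hrho Hrs]].
  destruct (Hsh rho Hrho) as [delta [Hdelta Hsd]].
  destruct (Hmesh (delta/2)) as [Nm HNm]; [lra|].
  exists (Nat.max (S N) Nm). split; [lia|]. intros i Hi V. split.
  - intros [HV [O [HO HOV]]]. split; auto.
    set (xs := fun j => proj1_sig (constructive_indefinite_description _ (proj2 HO j))).
    assert (Hxs : forall j, O j (xs j) /\ O (S j) (f (xs j))).
    { intro j. unfold xs. destruct (constructive_indefinite_description _ (proj2 HO j)) as [p Hp].
      simpl. exact Hp. }
    assert (Hps : pseudo_orbit d f delta xs).
    { intro j. assert (H := HNm (S (Nat.max (S N) Nm)) ltac:(lia) (O (S j)) (proj1 HO (S j))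
        (f (xs j)) (xs (S j)) (proj2 (Hxs j)) (proj1 (Hxs (S j)))). lra. }
    destruct (Hsd xs Hps) as [z Hz].
    exists (fun j => cellS A (S i) (fun q => q = Nat.iter j f z)). split.
    + split.
      * intro j; apply (cell_pt d A Hds).
      * intro j. exists (Nat.iter j f z). split.
        -- apply (cell_pt d A Hds).
        -- apply (cell_pt d A Hds (S i) (Nat.iter (S j) f z)).
    + intro j.
      destruct (refines_le d A Hds N (S i) ltac:(lia) _ (proj1 (cell_pt d A Hds (S i) (Nat.iter j f z))))
        as [T [HT HTs]].
      intros y Hy.
      destruct (classic (T = V j)) as [E|E].
      * subst. apply HTs; auto.
      * exfalso. assert (H := Hrs T (V j) HT (proj1 HV j) E (Nat.iter j f z) (xs j)
          (HTs _ (proj2 (cell_pt d A Hds (S i) (Nat.iter j f z)))) (HOV j _ (proj1 (Hxs j)))).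
        specialize (Hz j). lra.
  - intros [HV [O [HO HOV]]]. split; auto.
    exists (fun j => cellS A (S (Nat.max (S N) Nm)) (O j)).
    destruct (po_image d f A Hds (S (Nat.max (S N) Nm)) (S i) ltac:(lia) O HO) as [HP Hsub].
    split; auto. intro j.
    apply (coarse d A Hds N (S (Nat.max (S N) Nm))); [lia| apply HP | apply HV |].
    destruct (proj1 (proj1 Hds (S i)) (O j) (proj1 HO j)) as [q Hq].
    exists q; split; [apply Hsub; auto | apply HOV; auto].
Qed.

Lemma part2 {X : Type} (d : X -> X -> R) f A : is_metric d -> continuous d f ->
  tame_defining_sequence d A -> complete_defseq A -> mittag_leffler_PO f A -> shadowing d f.
Proof.
  intros Hm Hc [Hds [Hmesh Hsep]] Hcomp Hml.
  pose proof (proj1 Hds) as Hpart.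
  set (k := fun n => proj1_sig (constructive_indefinite_description _ (Hml n))).
  assert (Hk : forall n, (n < k n)%nat /\ forall i, (k n <= i)%nat -> forall V,
     PO_image f A n (S (k n)) V <-> PO_image f A n (S i) V).
  { intro n. unfold k. destruct (constructive_indefinite_description _ (Hml n)) as [kn Hkn].
    exact Hkn. }
  set (E := fun n V => PO_image f A n (S (k n)) V).
  assert (Hext : forall n V, exists V', E n V -> E (S n) V' /\ forall j, subset (V' j) (V j)).
  { intros n V. destruct (classic (E n V)) as [HE|HE]; [|exists V; intro; contradiction].
    destruct (Hk n) as [Hkn1 Hkn2]. destruct (Hk (S n)) as [HkSn1 HkSn2].
    assert (Hi1 : (k n <= Nat.max (k n) (k (S n)))%nat) by apply Nat.le_max_l.
    assert (Hi2 : (k (S n) <= Nat.max (k n) (k (S n)))%nat) by apply Nat.le_max_r.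
    revert Hi1 Hi2. generalize (Nat.max (k n) (k (S n))). intros i Hi1 Hi2.
    destruct (proj1 (Hkn2 i Hi1 V) HE) as [HV [O [HO HOV]]].
    exists (fun j => cellS A (S n) (O j)). intros _.
    destruct (po_image d f A Hds (S n) (S i) ltac:(lia) O HO) as [HPO Hsub].
    split.
    - unfold E. apply (HkSn2 i Hi2). split; auto. exists O; split; auto.
    - intro j. apply (coarse d A Hds n (S n)); [lia | apply HPO | apply HV |].
      destruct (proj1 (Hpart (S i)) (O j) (proj1 HO j)) as [q Hq].
      exists q. split; [apply Hsub; auto | apply HOV; auto]. }
  set (g := fun n V => proj1_sig (constructive_indefinite_description _ (Hext n V))).
  assert (Hg : forall n V, E n V -> E (S n) (g n V) /\ forall j, subset (g n V j) (V j)).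
  { intros n V. unfold g. destruct (constructive_indefinite_description _ (Hext n V)) as [V' HV'].
    exact HV'. }
  intros eps Heps.
  destruct (Hmesh (eps/2)) as [N HN]; [lra|].
  destruct (Hk N) as [HkN1 HkN2].
  destruct (Hsep (S (k N))) as [rho [Hrho Hrs]].
  exists rho. split; auto. intros x Hx.
  set (O := fun j => cellS A (S (k N)) (fun q => q = x j)).
  assert (HO : PO f (A (S (k N))) O).
  { split.
    - intro j; apply (cell_pt d A Hds).
    - intro j. exists (x j). split; [apply (cell_pt d A Hds)|].
      destruct (proj2 (proj2 (proj2 (Hpart (S (k N))))) (f (x j))) as [T [HT HTf]].
      destruct (proj2 (proj2 (proj2 (Hpart (S (k N))))) (x (S j))) as [T2 [HT2 HT2x]].
      unfold O. rewrite (cellS_eq d A (S (k N)) T2 _ (Hpart _) HT2); eauto.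
      + destruct (classic (T = T2)) as [EE|EE]; [subst; auto|].
        exfalso. assert (H := Hrs T T2 HT HT2 EE _ _ HTf HT2x). specialize (Hx j). lra.
      + intros q ->; auto. }
  destruct (po_image d f A Hds N (S (k N)) ltac:(lia) O HO) as [HV0 HOV0].
  set (V0 := fun j => cellS A N (O j)).
  assert (HE0 : E N V0) by (split; auto; exists O; split; auto).
  set (W := iterseq V0 (fun m V => g (N + m)%nat V)).
  assert (HWE : forall m, E (N + m)%nat (W m)).
  { induction m.
    - rewrite Nat.add_0_r. exact HE0.
    - rewrite Nat.add_succ_r. change (W (S m)) with (g (N + m)%nat (W m)). apply Hg; auto. }
  assert (HWn : forall m j, subset (W (S m) j) (W m j)).
  { intros m j. change (W (S m)) with (g (N + m)%nat (W m)). apply Hg; auto. }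
  assert (HWmon : forall m m', (m <= m')%nat -> forall j, subset (W m' j) (W m j)).
  { intros m m' Hle. induction Hle; intros j y Hy; auto. apply IHHle. apply HWn; auto. }
  assert (HWA : forall m j, A (N + m)%nat (W m j)).
  { intros m j. exact (proj1 (proj1 (HWE m)) j). }
  set (U := fun n => cellS A n (W (n - N)%nat 0%nat)).
  assert (HU : forall n, A n (U n) /\ subset (W (n - N)%nat 0%nat) (U n)).
  { intro n. apply (cellS_in d A Hds n (N + (n - N))); [lia|]. apply HWA. }
  assert (HUn : forall n, subset (U (S n)) (U n)).
  { intro n. apply (coarse d A Hds n (S n)); [lia | apply HU | apply HU |].
    destruct (proj1 (Hpart _) _ (HWA (S n - N)%nat 0%nat)) as [q Hq].
    exists q. split; [apply HU; auto|]. apply HU. apply (HWmon (n - N)%nat (S n - N)%nat); [lia|auto]. }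
  destruct (Hcomp U (fun n => proj1 (HU n)) HUn) as [z Hz].
  assert (Hz0 : forall m, W m 0%nat z).
  { intro m. specialize (Hz (N + m)%nat). unfold U in Hz.
    replace (N + m - N)%nat with m in Hz by lia.
    destruct Hz as [T [HT [[q [Hq1 Hq2]] HTz]]].
    rewrite <- (part_unique d (A (N + m)%nat) (Hpart _) T (W m 0%nat) q); auto. }
  assert (Horb : forall j m, W m j (Nat.iter j f z)).
  { induction j; [exact Hz0|]. intro m.
    set (y := Nat.iter j f z).
    destruct (Hsep (N + m)%nat) as [r [Hr Hrs']].
    destruct (Hc y r Hr) as [eta [Heta Hcont]].
    destruct (Hmesh (eta/2)) as [Nm HNm]; [lra|].
    destruct (proj2 (proj1 (HWE (Nat.max m Nm))) j) as [a [Ha1 Ha2]].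
    assert (Hya := HNm (N + Nat.max m Nm)%nat ltac:(lia) _ (HWA (Nat.max m Nm) j) y a (IHj _) Ha1).
    assert (Hfa := Hcont a ltac:(lra)).
    destruct (proj2 (proj2 (proj2 (Hpart (N + m)%nat))) (f y)) as [T [HT HTf]].
    change (W m (S j) (f y)).
    destruct (classic (T = W m (S j))) as [EE|EE]; [subst; auto|].
    exfalso.
    assert (H := Hrs' T (W m (S j)) HT (HWA m (S j)) EE (f y) (f a) HTf
      (HWmon m (Nat.max m Nm) ltac:(lia) (S j) (f a) Ha2)). lra. }
  exists z. intro j.
  assert (Hxj : W 0%nat j (x j)).
  { change (V0 j (x j)). apply HOV0. apply (cell_pt d A Hds). }
  assert (H := HN N (le_n N) (W 0%nat j) ltac:(rewrite <- (Nat.add_0_r N); apply HWA) _ _ (Horb j 0%nat) Hxj).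
  lra.
Qed.

Theorem theorem4p16 (X : Type) (d : X -> X -> R) (f : X -> X)
  (A : nat -> (X -> Prop) -> Prop) :
  is_metric d -> separable d -> continuous d f -> tame_defining_sequence d A ->
  (shadowing d f -> finite_shadowing d f /\ mittag_leffler_PO f A) /\
  (complete_defseq A -> uniformly_continuous d f ->
     finite_shadowing d f -> mittag_leffler_PO f A -> shadowing d f).
Proof.
  intros Hm _ Hc Ht. split.
  - intro Hs. split; [apply part1_fs; auto | apply (part1_ml d f A); auto].
  - intros Hcomp _ _ Hml. apply (part2 d f A); auto.
Qed.
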